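(* Let $K\subset[0,1]^N$ be a self-similar sponge. Then for every $x\in(0,1)^N\cap K$, every tangent $T\in\mathrm{Tan}(K,x)$ is locally self-similar.
   Context: A self-similar sponge is the attractor $K$ (unique nonempty compact set with $K=\bigcup_iS_i(K)$) of a system $\{S_i(y)=k^{-1}y+p_i:[0,1]^N\to[0,1]^N\}_{i=1}^m$ with $k\ge2$ an integer and $p_1,\dots,p_m$ distinct points of $\{0,\frac1k,\dots,\frac{k-1}k\}^N$. A set $F\subset\mathbb{R}^N$ is locally self-similar if for all $x,y\in F$ and $\rho_1,\rho_2>0$ there is a similarity $g:\mathbb{R}^N\to\mathbb{R}^N$ such that $g(B(x,\rho_1)\cap F)$ is a subset of $B(y,\rho_2)\cap F$ and is open relative to $F$. With $\mathrm{exc}(A,B)=\sup_{a\in A}\inf_{b\in B}|a-b|$, closed sets $X_m\to X$ (Attouch–Wets) iff for every $r>0$, $\mathrm{exc}(X_m\cap\overline{B}(\mathbf{0},r),X)\to0$ and $\mathrm{exc}(X\cap\overline{B}(\mathbf{0},r),X_m)\to0$; a closed $T\ni\mathbf{0}$ is in $\mathrm{Tan}(K,x)$ if $r_j^{-1}(K-x)\to T$ for some $r_j\downarrow0$. *)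

(* Defs.v *)
From HB Require Import structures.
From mathcomp Require Import all_boot all_order all_algebra.
From mathcomp Require Import all_classical all_reals all_analysis.
Set Implicit Arguments. Unset Strict Implicit. Unset Printing Implicit Defensive.
Import Order.TTheory GRing.Theory Num.Theory.
Import numFieldNormedType.Exports.
Local Open Scope classical_set_scope.
Local Open Scope ring_scope.

Section Defs.
Variables (R : realType) (N : nat).
Notation V := 'rV[R]_N.

Definition edist (a b : V) : R :=
  Num.sqrt (\sum_(i < N) (a ord0 i - b ord0 i) ^+ 2).

Definition eball (x : V) (rho : R) : set V := [set y | edist x y < rho].
Definition ecball (x : V) (r : R) : set V := [set y | edist x y <= r].

Definition similarity (g : V -> V) : Prop :=
  exists2 lam : R, 0 < lam & forall a b, edist (g a) (g b) = lam * edist a b.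

Definition rel_open (F A : set V) : Prop := exists2 U : set V, open U & A = U `&` F.

Definition locally_self_similar (F : set V) : Prop :=
  forall x y : V, F x -> F y -> forall rho1 rho2 : R, 0 < rho1 -> 0 < rho2 ->
    exists g : V -> V, [/\ similarity g,
      g @` (eball x rho1 `&` F) `<=` eball y rho2 `&` F &
      rel_open F (g @` (eball x rho1 `&` F))].

(* exc(A,B) = sup_{a in A} inf_{b in B} |a - b|, in the extended reals;
   inf over empty B is +oo; sup over empty A is taken to be 0
   (the supremum of a family of nonnegative quantities). *)
Definition exc (A B : set V) : \bar R :=
  ereal_sup ([set 0%E] `|`
    [set ereal_inf [set (edist a b)%:E | b in B] | a in A]).

Definition AW_cvg (Xs : nat -> set V) (X : set V) : Prop :=
  forall r : R, 0 < r ->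
    (fun m => exc (Xs m `&` ecball 0 r) X) @ \oo --> 0%E /\
    (fun m => exc (X `&` ecball 0 r) (Xs m)) @ \oo --> 0%E.

Definition blowup (K : set V) (x : V) (r : R) : set V :=
  [set r^-1 *: (y - x) | y in K].

Definition tangent (K : set V) (x : V) (T : set V) : Prop :=
  [/\ closed T, T 0 &
    exists r : nat -> R, [/\ forall j, 0 < r j, forall j, r j.+1 < r j,
      r @ \oo --> 0 & AW_cvg (fun j => blowup K x (r j)) T]].

Definition sponge_map (k : nat) (p : V) (y : V) : V := k%:R^-1 *: y + p.

Definition self_similar_sponge (K : set V) : Prop :=
  exists (k m : nat) (p : 'I_m -> V),
    [/\ (2 <= k)%N, injective p,
      forall i j, exists l : 'I_k, p i ord0 j = l%:R / k%:R &
      [/\ K !=set0, compact K &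
      K = \bigcup_(i in [set: 'I_m]) (sponge_map k (p i) @` K)]].

Definition open_cube : set V := [set x | forall j, 0 < x ord0 j < 1].
End Defs.

(* Main.v *)
From Pilot Require Import Defs.
From mathcomp Require Import all_boot all_order all_algebra.
From mathcomp Require Import all_classical all_reals all_analysis.
From mathcomp Require Import ring lra zify.
Import Pilot.Defs.
Set Implicit Arguments. Unset Strict Implicit. Unset Printing Implicit Defensive.
Import Order.TTheory GRing.Theory Num.Theory.
Import numFieldNormedType.Exports.
Local Open Scope classical_set_scope.
Local Open Scope ring_scope.

Section Metric.
Variables (R : realType) (N : nat).
Local Notation V := 'rV[R]_N.

Lemma sum_sq_le_sq_sum (I : Type) (s : seq I) (f : I -> R) :
  \sum_(x <- s) f x ^+ 2 <= (\sum_(x <- s) `|f x|) ^+ 2.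
Proof.
elim: s => [|a s IH]; first by rewrite !big_nil expr0n.
rewrite !big_cons.
have h0 : 0 <= \sum_(x <- s) `|f x| by apply: sumr_ge0 => i _.
have h1 : 0 <= `|f a| by [].
rewrite -[f a ^+ 2]real_normK ?num_real //.
nra.
Qed.

Lemma edist_ge0 (a b : V) : 0 <= edist a b.
Proof. exact: sqrtr_ge0. Qed.

Lemma edist_sym (a b : V) : edist a b = edist b a.
Proof.
rewrite /edist; congr Num.sqrt; apply: eq_bigr => i _.
by rewrite -sqrrN opprB.
Qed.

Lemma edist_xx (a : V) : edist a a = 0.
Proof.
rewrite /edist big1 ?sqrtr0 // => i _; by rewrite subrr expr0n.
Qed.

Lemma edist_coord (a b : V) i : `|a ord0 i - b ord0 i| <= edist a b.
Proof.
rewrite /edist -sqrtr_sqr ler_sqrt; last by apply: sumr_ge0 => j _; exact: sqr_ge0.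
rewrite (bigD1 i) //= lerDl; apply: sumr_ge0 => j _; exact: sqr_ge0.
Qed.

Lemma edist_le_sum (a b : V) : edist a b <= \sum_(i < N) `|a ord0 i - b ord0 i|.
Proof.
rewrite /edist.
have h0 : 0 <= \sum_(i < N) `|a ord0 i - b ord0 i| by apply: sumr_ge0.
rewrite -(ger0_norm h0) -sqrtr_sqr ler_sqrt; last exact: sqr_ge0.
exact: sum_sq_le_sq_sum.
Qed.

Lemma edist_le_unif (a b : V) (d : R) :
  (forall i, `|a ord0 i - b ord0 i| <= d) -> edist a b <= N%:R * d.
Proof.
move=> H; apply: (le_trans (edist_le_sum a b)).
apply: le_trans (ler_sum _ (fun i _ => H i)) _.
by rewrite sumr_const card_ord mulr_natl.
Qed.

Lemma cauchy_schwarz (u v : 'I_N -> R) :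
  \sum_i u i * v i <= Num.sqrt (\sum_i u i ^+ 2) * Num.sqrt (\sum_i v i ^+ 2).
Proof.
set S := \sum_i u i ^+ 2; set T := \sum_i v i ^+ 2; set P := \sum_i u i * v i.
have S0 : 0 <= S by apply: sumr_ge0 => i _; exact: sqr_ge0.
have T0 : 0 <= T by apply: sumr_ge0 => i _; exact: sqr_ge0.
have key : forall l, 0 <= S + 2 * l * P + l ^+ 2 * T.
  move=> l; have : 0 <= \sum_i (u i + l * v i) ^+ 2
    by apply: sumr_ge0 => i _; exact: sqr_ge0.
  congr (_ <= _); rewrite /S /T /P !mulr_sumr -!big_split /=.
  by apply: eq_bigr => i _; ring.
have PST : P ^+ 2 <= S * T.
  have [T0'|Tpos] := eqVneq T 0.
    have vz : forall i, v i = 0.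
      move=> i; apply/eqP; rewrite -sqrf_eq0; apply/eqP.
      by move/eqP: T0'; rewrite psumr_eq0 => [/allP/(_ i (mem_index_enum _))/eqP|j _]
       //; exact: sqr_ge0.
    have -> : P = 0 by rewrite /P big1 // => i _; rewrite vz mulr0.
    by rewrite T0' mulr0 expr0n.
  have Tp : 0 < T by rewrite lt_neqAle eq_sym Tpos T0.
  have := key (- P / T).
  have -> : S + 2 * (- P / T) * P + (- P / T) ^+ 2 * T = S - P ^+ 2 / T.
    by field; rewrite Tpos.
  rewrite subr_ge0 ler_pdivrMr //.
have -> : Num.sqrt S * Num.sqrt T = Num.sqrt (S * T) by rewrite sqrtrM.
apply: le_trans (ler_norm P) _.
by rewrite -sqrtr_sqr ler_sqrt // mulr_ge0.
Qed.

Lemma edist_triangle (a b c : V) : edist a c <= edist a b + edist b c.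
Proof.
rewrite /edist.
set u := fun i => a ord0 i - b ord0 i.
set v := fun i => b ord0 i - c ord0 i.
have -> : \sum_(i < N) (a ord0 i - c ord0 i) ^+ 2 = \sum_i (u i + v i) ^+ 2.
  by apply: eq_bigr => i _; rewrite /u /v; congr (_ ^+ 2); ring.
rewrite -/(\sum_i u i ^+ 2) -/(\sum_i v i ^+ 2).
have hA := sqrtr_ge0 (\sum_i u i ^+ 2).
have hB := sqrtr_ge0 (\sum_i v i ^+ 2).
have cs := cauchy_schwarz u v.
have S0 : 0 <= \sum_i u i ^+ 2 by apply: sumr_ge0 => i _; exact: sqr_ge0.
have T0 : 0 <= \sum_i v i ^+ 2 by apply: sumr_ge0 => i _; exact: sqr_ge0.
have e : \sum_i (u i + v i) ^+ 2 =
  \sum_i u i ^+ 2 + 2 * \sum_i u i * v i + \sum_i v i ^+ 2.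
  rewrite mulr_sumr -!big_split /=; apply: eq_bigr => i _; ring.
rewrite e.
have hs := sqr_sqrtr S0; have ht := sqr_sqrtr T0.
rewrite -[X in X <= _](@ger0_norm _ (Num.sqrt _)) ?sqrtr_ge0 //.
rewrite -[X in _ <= X](@ger0_norm _ (Num.sqrt (\sum_i u i ^+ 2) + _)) ?addr_ge0 //.
rewrite -[X in _ <= X]sqrtr_sqr -[X in X <= _]sqrtr_sqr.
rewrite sqr_sqrtr.
  rewrite ler_sqrt; last exact: sqr_ge0.
  set A := Num.sqrt _ in hA hs cs *; set B := Num.sqrt _ in hB ht cs *.
  rewrite -hs -ht; nra.
rewrite -e; apply: sumr_ge0 => i _; exact: sqr_ge0.
Qed.

End Metric.
Section Topo.
Variables (R : realType) (N : nat).
Local Notation V := 'rV[R]_N.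

Lemma mxball_coord (x y : V) e : ball x e y -> forall i, `|x ord0 i - y ord0 i| < e.
Proof. by move=> [_ H] i; have := H ord0 i. Qed.

Lemma coord_mxball (x y : V) e : 0 < e ->
  (forall i, `|x ord0 i - y ord0 i| < e) -> ball x e y.
Proof.
move=> e0 H; split => // i j; rewrite (ord1 i); exact: H.
Qed.

Lemma closed_edist (T : set V) a : closed T ->
  (forall e, 0 < e -> exists2 b, T b & edist a b < e) -> T a.
Proof.
move=> cT H; apply: cT => B /nbhs_ballP [e e0 sB].
have [b Tb hb] := H e e0; exists b; split => //; apply: sB.
apply: coord_mxball => // i; exact: le_lt_trans (edist_coord _ _ i) hb.
Qed.

Lemma eball_open (c : V) r : open (eball c r).
Proof.
rewrite openE => y Hy; rewrite /interior; apply/nbhs_ballP.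
rewrite /eball /= in Hy.
set d := r - edist c y.
have d0 : 0 < d by rewrite subr_gt0.
exists (d / (N%:R + 1)); first by apply: divr_gt0 => //; rewrite ltr_wpDl.
move=> z /mxball_coord Hz; rewrite /eball /=.
apply: le_lt_trans (edist_triangle c y z) _.
have := edist_le_unif (fun i => ltW (Hz i)).
have -> : N%:R * (d / (N%:R + 1)) = d - d / (N%:R + 1).
  by field; rewrite lt0r_neq0 // ltr_wpDl.
have : 0 < d / (N%:R + 1) by apply: divr_gt0 => //; rewrite ltr_wpDl.
rewrite /d; lra.
Qed.

Definition aff (l : R) (b v : V) : V := l *: v + b.

Lemma aff_coord l b v i : aff l b v ord0 i = l * v ord0 i + b ord0 i.
Proof. by rewrite /aff !mxE. Qed.

Lemma edist_aff l b u v : 0 <= l -> edist (aff l b u) (aff l b v) = l * edist u v.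
Proof.
move=> l0; rewrite /edist.
have -> : \sum_(i < N) (aff l b u ord0 i - aff l b v ord0 i) ^+ 2 =
   l ^+ 2 * \sum_(i < N) (u ord0 i - v ord0 i) ^+ 2.
  rewrite mulr_sumr; apply: eq_bigr => i _; rewrite !aff_coord; ring.
by rewrite sqrtrM ?sqr_ge0 // sqrtr_sqr ger0_norm.
Qed.

Lemma similarity_aff l b : 0 < l -> similarity (aff l b).
Proof. by move=> l0; exists l => // u v; rewrite edist_aff // ltW. Qed.

Lemma aff_comp l1 b1 l2 b2 v :
  aff l2 b2 (aff l1 b1 v) = aff (l2 * l1) (l2 *: b1 + b2) v.
Proof. by apply/rowP => i; rewrite !aff_coord ?mxE; ring. Qed.

Lemma aff_inv l b v : l != 0 -> aff l^-1 (- (l^-1 *: b)) (aff l b v) = v.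
Proof. by move=> l0; apply/rowP => i; rewrite !aff_coord ?mxE; field. Qed.

Lemma aff_inv' l b v : l != 0 -> aff l b (aff l^-1 (- (l^-1 *: b)) v) = v.
Proof. by move=> l0; apply/rowP => i; rewrite !aff_coord ?mxE; field. Qed.

End Topo.
Section Sponge.
Variables (R : realType) (N : nat).
Local Notation V := 'rV[R]_N.

Lemma coord_le_norm (v : V) i : `|v ord0 i| <= `|v|.
Proof.
have /mapP[j Hj ->] : `|v ord0 i| \in [seq `|v x.1 x.2| | x : 'I_1 * 'I_N].
  by apply/mapP; exists (ord0, i) => //=; rewrite mem_enum.
by rewrite [leRHS]/Num.Def.normr /= mx_normrE; apply/bigmax_geP; right => /=; exists j.
Qed.

Definition isint (v : V) := forall i, exists z : int, v ord0 i = z%:~R.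

Variables (K : set V) (k m : nat) (p : 'I_m -> V).
Hypotheses (k2 : (2 <= k)%N)
  (pint : forall i j, exists l : 'I_k, p i ord0 j = l%:R / k%:R)
  (Kc : compact K)
  (Keq : K = \bigcup_(i in [set: 'I_m]) (sponge_map k (p i) @` K)).

Lemma kR_gt1 : 1 < (k%:R : R).
Proof. by rewrite (_ : 1 = 1%:R) // ltr_nat. Qed.
Lemma kR_gt0 : 0 < (k%:R : R).
Proof. exact: lt_trans ltr01 kR_gt1. Qed.

Lemma K_dec u : K u -> exists i, exists2 q, K q & u = k%:R^-1 *: q + p i.
Proof.
move=> Ku; have : K u by []; rewrite {1}Keq => -[i _ [q Kq <-]].
by exists i, q.
Qed.

Lemma K_img i q : K q -> K (k%:R^-1 *: q + p i).
Proof. move=> Kq; rewrite Keq; exists i => //; exists q => //. Qed.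

Lemma p_bounds i j : 0 <= p i ord0 j <= 1 - k%:R^-1.
Proof.
have [l ->] := pint i j.
have kp := kR_gt0.
have hl : (l%:R : R) <= k%:R - 1.
  have lk := ltn_ord l.
  rewrite (_ : 1 = 1%:R) // -natrB ?ler_nat; lia.
apply/andP; split; first by apply: divr_ge0.
rewrite ler_pdivrMr // mulrBl mul1r mulVf ?lt0r_neq0 //.
Qed.

Lemma K_bounded : exists B, forall v, K v -> forall i, `|v ord0 i| <= B.
Proof.
have [M [_ HM]] := compact_bounded Kc.
exists (M + 1) => v Kv i; apply: le_trans (coord_le_norm v i) _.
by apply: HM => //; rewrite ltrDl.
Qed.

Lemma K_cube v : K v -> forall i, 0 <= v ord0 i <= 1.
Proof.
have [B HB] := K_bounded.
move=> Kv i.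
have kp := kR_gt0; have k1 := kR_gt1.
have kinv : 0 < k%:R^-1 :> R by rewrite invr_gt0.
set S := [set w ord0 i | w in K].
have S0 : S !=set0 by exists (v ord0 i); exists v.
have Sub : has_ubound S by exists B => _ [w Kw <-]; exact: le_trans (ler_norm _) (HB w Kw i).
have hsup : sup S <= 1.
  have : sup S <= k%:R^-1 * sup S + (1 - k%:R^-1).
    apply: ge_sup => // _ [w Kw <-].
    have [j [q Kq ->]] := K_dec Kw.
    rewrite mxE [in X in X + _]mxE.
    have := p_bounds j i; have : q ord0 i <= sup S by apply: ub_le_sup => //; exists q.
    move=> h1 /andP[_ h2]; have := ler_wpM2l (ltW kinv) h1; lra.
  move=> h; have : (1 - k%:R^-1) * sup S <= (1 - k%:R^-1) * 1 by lra.
  rewrite ler_pM2l //; rewrite subr_gt0 invf_lt1 //.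
set S' := [set - w ord0 i | w in K].
have S0' : S' !=set0 by exists (- v ord0 i); exists v.
have Sub' : has_ubound S'.
  by exists B => _ [w Kw <-]; have := HB w Kw i; rewrite ler_norml => /andP[]; lra.
have hsup' : sup S' <= 0.
  have : sup S' <= k%:R^-1 * sup S'.
    apply: ge_sup => // _ [w Kw <-].
    have [j [q Kq ->]] := K_dec Kw.
    rewrite mxE [in X in - (X + _)]mxE.
    have := p_bounds j i; have : - q ord0 i <= sup S' by apply: ub_le_sup => //; exists q.
    move=> h1 /andP[h2 _].
    have := ler_wpM2l (ltW kinv) h1; lra.
  move=> h; have : (1 - k%:R^-1) * sup S' <= (1 - k%:R^-1) * 0 by lra.
  rewrite ler_pM2l //; rewrite subr_gt0 invf_lt1 //.
have h1 : v ord0 i <= sup S by apply: ub_le_sup => //; exists v.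
have h2 : - v ord0 i <= sup S' by apply: ub_le_sup => //; exists v.
apply/andP; split; lra.
Qed.


Lemma int_cell_eq (u q z z' : V) : (forall i, 0 < u ord0 i < 1) ->
  (forall i, 0 <= q ord0 i <= 1) -> isint z -> isint z' -> u + z = q + z' -> u = q.
Proof.
move=> hu hq iz iz' e; apply/rowP => i.
have := congr1 (fun w : V => w ord0 i) e; rewrite !mxE.
have [a ha] := iz i; have [b hb] := iz' i; rewrite ha hb => e'.
have eb : ((b - a)%:~R : R) = u ord0 i - q ord0 i by rewrite intrB; lra.
have := hu i; have := hq i => /andP[q0 q1] /andP[u0 u1].
have e1 : ((b - a)%:~R : R) < 1%:~R by rewrite eb; lra.
have e2 : ((-1)%:~R : R) < (b - a)%:~R by rewrite eb mulrN1z; lra.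
rewrite ltr_int in e1; rewrite ltr_int in e2.
have hz : b - a = 0 by lia.
move: eb; rewrite hz (_ : (0%:~R : R) = 0) //; lra.
Qed.

Lemma lattice n : exists Z : set V, [/\ (forall z, Z z -> isint z),
  (forall q z, K q -> Z z -> K ((k%:R ^+ n)^-1 *: (q + z))) &
  (forall u, K u -> exists q z, [/\ K q, Z z & (k%:R ^+ n) *: u = q + z])].
Proof.
have kp := kR_gt0; have kn0 : (k%:R : R) != 0 by rewrite lt0r_neq0.
elim: n => [|n [Z [Zi Zf Zb]]].
  exists [set 0]; split.
  - by move=> z -> i; exists 0; rewrite mxE.
  - by move=> q z Kq ->; rewrite expr0 invr1 scale1r addr0.
  - by move=> u Ku; exists u, 0; rewrite expr0 scale1r addr0.
exists [set w | exists i z, Z z /\ w = k%:R *: (p i + z)]; split.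
- move=> _ [i [z [Zz ->]]] j.
  have [a ha] := Zi z Zz j; have [l hl] := pint i j.
  exists (l%:Z + a * k%:Z); rewrite !mxE hl ha intrD intrM /=.
  rewrite -!pmulrn. field. exact: kn0.
- move=> q _ Kq [i [z [Zz ->]]].
  have -> : (k%:R ^+ n.+1)^-1 *: (q + k%:R *: (p i + z)) =
            (k%:R ^+ n)^-1 *: ((k%:R^-1 *: q + p i) + z).
    apply/rowP => j; rewrite !mxE exprS; field.
    by rewrite kn0 expf_neq0.
  apply: Zf => //; exact: K_img.
- move=> u Ku; have [q [z [Kq Zz e]]] := Zb u Ku.
  have [i [q' Kq' eq']] := K_dec Kq.
  exists q', (k%:R *: (p i + z)); split => //; first by exists i, z.
  apply/rowP => j; have := congr1 (fun w : V => w ord0 j) e.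
  rewrite eq' !mxE exprS => e'.
  rewrite -mulrA e'. field. exact: kn0.
Qed.

End Sponge.
Section Helpers.
Variables (R : realType) (N : nat).
Local Notation V := 'rV[R]_N.

Lemma coord0 i : (0 : V) ord0 i = 0.
Proof. by rewrite mxE. Qed.

Lemma closed_coord (T : set V) (a : V) : closed T ->
  (forall e, 0 < e -> exists2 b, T b & forall i, `|a ord0 i - b ord0 i| < e) -> T a.
Proof.
move=> cT H; apply: cT => B /nbhs_ballP [e e0 sB].
have [b Tb hb] := H e e0; exists b; split => //; apply: sB.
exact: coord_mxball.
Qed.

Lemma closed_trans (A : set V) w0 : closed A -> closed [set w | A (w - w0)].
Proof.
move=> cA a Ha; apply: (closed_coord cA) => e e0.
have [b [Sb bab]] := Ha (ball a e) (nbhsx_ballx a _ e0).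
exists (b - w0) => // i; rewrite !mxE.
have := mxball_coord bab i; congr (_ < _); congr (`|_|); ring.
Qed.

Lemma closed_finU (I : eqType) (s : seq I) (f : I -> V) (A : set V) : closed A ->
  closed [set w | exists2 c, c \in s & A (w - f c)].
Proof.
move=> cA; elim: s => [|c s IH].
  have -> : [set w | exists2 c, c \in [::] & A (w - f c)] = set0.
    by apply/seteqP; split => w //= [].
  exact: closed0.
have -> : [set w | exists2 c', c' \in c :: s & A (w - f c')] =
   [set w | A (w - f c)] `|` [set w | exists2 c, c \in s & A (w - f c)].
  apply/seteqP; split => w /=.
    move=> [c']; rewrite inE => /orP[/eqP -> h|h1 h2]; [by left|by right; exists c'].
  by move=> [h|[c' h1 h2]]; [exists c => //; rewrite inE eqxx|exists c' => //; rewrite inE h1 orbT].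
by apply: closedU => //; exact: closed_trans.
Qed.

Lemma pigeon (T : finType) (f : nat -> T) :
  exists c, forall n0, exists2 j, (n0 <= j)%N & f j = c.
Proof.
apply: contrapT => H.
have H' : forall c, exists n0, forall j, (n0 <= j)%N -> f j != c.
  move=> c; apply: contrapT => Hc; apply: H; exists c => n0.
  apply: contrapT => Hn; apply: Hc; exists n0 => j hj; apply/eqP => e.
  by apply: Hn; exists j.
have /fin_all_exists [g Hg] := H'.
set n1 := \max_(c : T) g c.
have := Hg (f n1) n1; rewrite eqxx => /(_ _)/negP; apply => //.
by apply: (@leq_bigmax T (fun c => g c)).
Qed.

Lemma small_delta (C e : R) : 0 <= C -> 0 < e ->
  exists d, [/\ 0 < d, d <= 1, d * C < e & d * C < 1].
Proof.
move=> C0 e0.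
set e' := e / (1 + e).
have e'0 : 0 < e' by apply: divr_gt0 => //; lra.
have e'e : e' < e.
  rewrite /e' ltr_pdivrMr; last lra.
  nra.
have e'1 : e' < 1 by rewrite /e' ltr_pdivrMr; lra.
exists (e' / (1 + C)); split.
- by apply: divr_gt0 => //; lra.
- rewrite ler_pdivrMr; last lra. lra.
- have : e' / (1 + C) * C <= e'.
    rewrite mulrAC ler_pdivrMr; last lra. nra.
  lra.
- have : e' / (1 + C) * C <= e'.
    rewrite mulrAC ler_pdivrMr; last lra. nra.
  lra.
Qed.

Lemma cube_margin (x : V) : open_cube x ->
  exists2 d, 0 < d & forall i, d <= x ord0 i /\ d <= 1 - x ord0 i.
Proof.
move=> hx.
suff : forall s : seq 'I_N, exists2 d, 0 < d &
    forall i, i \in s -> d <= x ord0 i /\ d <= 1 - x ord0 i.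
  by move=> /(_ (enum 'I_N)) [d d0 H]; exists d => // i; apply: H; rewrite mem_enum.
elim => [|a s [d d0 H]]; first by exists 1 => // i; rewrite in_nil.
have /andP[h1 h2] := hx a.
exists (Num.min d (Num.min (x ord0 a) (1 - x ord0 a))).
  by rewrite !lt_min d0 h1 subr_gt0 h2.
move=> i; rewrite inE => /orP[/eqP ->|hi].
  by rewrite !ge_min !lexx !orbT.
have [hd1 hd2] := H i hi.
by rewrite !ge_min hd1 hd2.
Qed.

Lemma exc_lt (A B : set V) e : (exc A B < e%:E)%E ->
  forall a, A a -> exists2 b, B b & edist a b < e.
Proof.
move=> H a Aa.
have : (ereal_inf [set (edist a b)%:E | b in B] < e%:E)%E.
  apply: le_lt_trans H; apply: ereal_sup_ubound; right; exists a => //.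
move/ereal_inf_lt => [_ [b Bb <-]]; rewrite lte_fin => h.
by exists b.
Qed.

Lemma ev_lt (f : nat -> \bar R) e : f @ \oo --> 0%E -> 0 < e ->
  exists n0, forall n, (n0 <= n)%N -> (f n < e%:E)%E.
Proof.
move=> H e0.
have := H _ (open_ereal_lt' (_ : 0%E < e%:E)%E); rewrite lte_fin => /(_ e0).
by move=> [n0 _ Hn]; exists n0 => n hn; apply: Hn.
Qed.

Lemma ev_lt_r (r : nat -> R) e : r @ \oo --> 0 -> 0 < e ->
  exists n0, forall n, (n0 <= n)%N -> `|r n| < e.
Proof.
move=> /cvgrPdist_lt H e0; have [n0 _ Hn] := H e e0.
by exists n0 => n hn; have := Hn n hn; rewrite /= sub0r normrN.
Qed.

End Helpers.
Section Est.
Variables (R : realType) (N : nat).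
Local Notation V := 'rV[R]_N.

Lemma est3 (u1 u2 w1 w2 y1 y2 A B D : R) : `|u1 - u2| < D -> `|w1| <= A ->
  `|w1 - w2| < D -> 0 <= u2 <= B -> `|y1 - y2| < D ->
  `|(u1 * w1 + y1) - (u2 * w2 + y2)| <= D * (A + B + 1).
Proof.
move=> h1 h2 h3 /andP[h4 h5] h6.
have E : (u1 * w1 + y1) - (u2 * w2 + y2) = (u1 - u2) * w1 + u2 * (w1 - w2) + (y1 - y2)
  by ring.
rewrite E; apply: le_trans (ler_normD _ _) _.
apply: le_trans (lerD (ler_normD _ _) (lexx _)) _.
rewrite !normrM (ger0_norm h4).
have D0 : 0 <= D by apply: le_trans (ltW h1).
have g1 : `|u1 - u2| * `|w1| <= D * A by apply: ler_pM => //; exact: ltW.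
have g2 : u2 * `|w1 - w2| <= B * D by apply: ler_pM => //; exact: ltW.
lra.
Qed.

Lemma est_inv (s0 s w t0 tt A B D : R) : 1 <= s0 -> 1 <= s -> `|s0 - s| < D ->
  `|w| <= A -> 0 <= t0 <= B -> `|t0 - tt| < D ->
  `|(w - t0) / s0 - (w - tt) / s| <= D * (A + B + 1).
Proof.
move=> hs0 hs h1 h2 /andP[h3 h4] h5.
have s00 : s0 != 0 by rewrite gt_eqF //; lra.
have s0' : s != 0 by rewrite gt_eqF //; lra.
have E : (w - t0) / s0 - (w - tt) / s = ((s - s0) * (w - t0)) / (s0 * s) + (tt - t0) / s.
  by field; rewrite s00 s0'.
rewrite E; apply: le_trans (ler_normD _ _) _.
have D0 : 0 <= D by apply: le_trans (ltW h1).
have ss1 : 1 <= s0 * s.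
  have : 0 <= (s0 - 1) * (s - 1) by apply: mulr_ge0; lra.
  rewrite mulrBl !mulrBr !mul1r !mulr1; lra.
have i1 : `|((s - s0) * (w - t0)) / (s0 * s)| <= `|(s - s0) * (w - t0)|.
  rewrite normf_div (ger0_norm (_ : 0 <= s0 * s)); last lra.
  rewrite ler_pdivrMr; last lra.
  by rewrite -[X in X <= _]mulr1 ler_wpM2l.
have i2 : `|(tt - t0) / s| <= `|tt - t0|.
  rewrite normf_div (ger0_norm (_ : 0 <= s)); last lra.
  rewrite ler_pdivrMr; last lra.
  by rewrite -[X in X <= _]mulr1 ler_wpM2l.
have i3 : `|(s - s0) * (w - t0)| <= D * (A + B).
  rewrite normrM; apply: ler_pM => //.
  - by rewrite distrC ltW.
  - apply: le_trans (ler_normB _ _) _; rewrite (ger0_norm h3); lra.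
have i4 : `|tt - t0| <= D by rewrite distrC ltW.
lra.
Qed.

Definition idx (M : nat) (c : {ffun 'I_N -> 'I_(M.*2.+1)}) : V :=
  \row_i (((c i : nat)%:R : R) - M%:R).

Lemma idx_int M c : isint (idx (M := M) c).
Proof.
move=> i; exists ((c i : nat)%:Z - M%:Z); rewrite mxE intrB.
by [].
Qed.

Lemma idx_bound M c i : `|idx (M := M) c ord0 i| <= M%:R.
Proof.
rewrite mxE ler_norml; have := ltn_ord (c i); set a := (c i : nat) => ha.
apply/andP; split.
  by rewrite lerBrDr addrC subrr.
rewrite lerBlDr -natrD ler_nat; lia.
Qed.

Lemma idx_surj M (w : V) : isint w -> (forall i, `|w ord0 i| <= M%:R) ->
  exists c, idx (M := M) c = w.
Proof.
move=> wi wb.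
have /fin_all_exists [a ha] := wi.
exists [ffun i => inord (absz (a i + M%:Z))]; apply/rowP => i.
rewrite !mxE ffunE ha.
have hb := wb i; rewrite ha -intr_norm (_ : (M%:R : R) = M%:Z%:~R) // ler_int in hb.
have hle : 0 <= a i + M%:Z.
  move: hb; rewrite ler_norml => /andP[h _]; lia.
rewrite inordK; last by lia.
have e : ((a i + M%:Z)%:~R : R) = (absz (a i + M%:Z))%:R.
  by rewrite -{1}(gez0_abs hle).
rewrite -e intrD (_ : (M%:Z%:~R : R) = M%:R) //; ring.
Qed.

End Est.
Section Tangent.
Variables (R : realType) (N : nat).
Local Notation V := 'rV[R]_N.
Variables (K : set V) (k m : nat) (p : 'I_m -> V).
Hypotheses (k2 : (2 <= k)%N)
  (pint : forall i j, exists l : 'I_k, p i ord0 j = l%:R / k%:R)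
  (Kc : compact K)
  (Keq : K = \bigcup_(i in [set: 'I_m]) (sponge_map k (p i) @` K)).
Variables (x : V) (T : set V) (r : nat -> R).
Hypotheses (hx : open_cube x) (Tcl : closed T) (rpos : forall j, 0 < r j)
  (rcv : r @ \oo --> 0) (AW : AW_cvg (fun j => blowup K x (r j)) T).
Variables (Z : nat -> set V) (nn : nat -> nat).
Hypotheses (Zi : forall n z, Z n z -> isint z)
  (Zf : forall n q z, K q -> Z n z -> K ((k%:R ^+ n)^-1 *: (q + z)))
  (Zb : forall n u, K u -> exists q z, [/\ K q, Z n z & k%:R ^+ n *: u = q + z])
  (nnP : forall j, r j <= 1 -> 1 <= r j * k%:R ^+ nn j <= k%:R).

Definition kn j : R := k%:R ^+ nn j.
Definition sc j : R := r j * kn j.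
Definition vfl j : V := locked (\row_i ((Num.floor (kn j * x ord0 i))%:~R) : V).
Definition tt j : V := locked (kn j *: x - vfl j).
Lemma vflE j : vfl j = \row_i ((Num.floor (kn j * x ord0 i))%:~R).
Proof. by rewrite /vfl -lock. Qed.
Lemma ttE j : tt j = kn j *: x - vfl j.
Proof. by rewrite /tt -lock. Qed.

Lemma kn_gt0 j : 0 < kn j.
Proof. by apply: exprn_gt0; exact: kR_gt0. Qed.

Lemma vfl_int j : isint (vfl j).
Proof. by move=> i; exists (Num.floor (kn j * x ord0 i)); rewrite vflE mxE. Qed.

Lemma tt_bounds j i : 0 <= tt j ord0 i < 1.
Proof.
rewrite ttE vflE !mxE; have := floor_le (kn j * x ord0 i); have := floorD1_gt (kn j * x ord0 i).
rewrite intrD => h1 h2; apply/andP; split; lra.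
Qed.

Lemma isintB (a b : V) : isint a -> isint b -> isint (a - b).
Proof.
move=> ha hb i; have [u hu] := ha i; have [v hv] := hb i.
by exists (u - v); rewrite !mxE hu hv intrB.
Qed.

Lemma blow_dec j (pp : V) : blowup K x (r j) pp ->
  exists q z, [/\ K q, Z (nn j) z & sc j *: pp + tt j = q + (z - vfl j)].
Proof.
move=> [y Ky <-]; have [q [z [Kq Zz e]]] := Zb (nn j) Ky.
exists q, z; split => //; rewrite ttE vflE; apply/rowP => i.
have := congr1 (fun w : V => w 0 i) e; rewrite !mxE => e'.
rewrite /sc -/(kn j) in e' *.
have r0 : r j != 0 by rewrite gt_eqF.
have e2 : q 0 i = kn j * y 0 i - z 0 i by rewrite e'; ring.
rewrite e2; field. exact: r0.
Qed.

Lemma blow_mk j q z : K q -> Z (nn j) z ->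
  blowup K x (r j) ((sc j)^-1 *: (q + (z - vfl j) - tt j)).
Proof.
move=> Kq Zz; exists ((kn j)^-1 *: (q + z)); first exact: Zf.
have r0 : r j != 0 by rewrite gt_eqF.
have k0 : kn j != 0 by rewrite gt_eqF // kn_gt0.
rewrite ttE vflE; apply/rowP => i; rewrite !mxE /sc; field.
by rewrite r0 k0.
Qed.


Definition code M j : {set {ffun 'I_N -> 'I_(M.*2.+1)}} :=
  [set c | `[< Z (nn j) (idx R c + vfl j) >]].

Lemma codeP M j c : (c \in code M j) <-> Z (nn j) (idx R c + vfl j).
Proof. by rewrite inE asboolE. Qed.

Lemma Lprime (x' : V) (rho : R) : T x' -> 0 < rho ->
  exists l b, [/\ 0 < l,
    forall v, edist x' v < rho -> T v -> K (aff l b v),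
    forall v, edist x' v < rho -> K (aff l b v) -> T v &
    forall v, edist x' v < rho -> open_cube (aff l b v)].
Proof.
move=> Tx' rho0.
have kp := kR_gt0 R k2; have k1 := kR_gt1 R k2.
have Kcube := K_cube k2 pint Kc Keq.
pose R0 := edist 0 x' + rho + 1.
have R0pos : 0 < R0 by rewrite /R0; have := edist_ge0 0 x'; lra.
have hB : forall v, edist x' v < rho -> edist 0 v < R0 - 1.
  move=> v hv; apply: le_lt_trans (edist_triangle 0 x' v) _; rewrite /R0; lra.
have hBc : forall v, edist x' v < rho -> forall i, `|v ord0 i| <= R0 - 1.
  move=> v hv i; have := edist_coord 0 v i; rewrite (coord0 R) sub0r normrN.
  have := hB v hv; lra.
have [M HM] : exists M : nat, k%:R * (R0 + 1) + 2 <= M%:R.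
  have h0 : 0 <= k%:R * (R0 + 1) + 2 by apply: addr_ge0 => //; apply: mulr_ge0; lra.
  by exists (Num.bound (k%:R * (R0 + 1) + 2)); apply: ltW; apply: archi_boundP.
have [n1 Hn1] : exists n1, forall j, (n1 <= j)%N -> r j <= 1.
  have [n1 Hn] := ev_lt_r rcv ltr01; exists n1 => j hj.
  by have := Hn j hj; rewrite gtr0_norm // => /ltW.
have [C HC] := pigeon (code M).
have /choice [sg Hsg] : forall i, exists j, (i + n1 <= j)%N /\ code M j = C.
  by move=> i; have [j hj hc] := HC (i + n1); exists j.
have sgb : forall i, 1 <= sc (sg i) <= k%:R.
  move=> i; apply: nnP; apply: Hn1; have := (Hsg i).1; lia.
pose CS := (`[1, k%:R]%classic : set R) `*`
           [set v : V | forall i, (`[0, k%:R]%classic : set R) (v ord0 i)].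
have CSc : compact CS.
  apply: compact_setX; first exact: segment_compact.
  have := @rV_compact R N (fun _ => `[0, k%:R]%classic) (fun _ => @segment_compact R 0 k%:R).
  exact.
pose phi i := (sc (sg i), tt (sg i)).
have FCS : (phi @ \oo) CS.
  exists 0%N => // i _; split.
    by rewrite /= in_itv /=; exact: sgb.
  move=> l /=; rewrite in_itv /=; have /andP[h1 h2] := tt_bounds (sg i) l.
  apply/andP; split => //; lra.
have [[s0 t0] [CS0 clc]] := CSc _ _ FCS.
have [hs0 ht0] := CS0.
move: hs0; rewrite /= in_itv /= => /andP[s01 s0k].
have t0b : forall l, 0 <= t0 ord0 l <= k%:R.
  by move=> l; have := ht0 l; rewrite /= in_itv.
have clP : forall e, 0 < e -> forall n0, exists i, [/\ (n0 <= i)%N,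
    `|s0 - sc (sg i)| < e & forall l, `|t0 ord0 l - tt (sg i) ord0 l| < e].
  move=> e e0 n0.
  have FA : (phi @ \oo) (phi @` [set i | (n0 <= i)%N]).
    by exists n0 => // i hi; exists i.
  have [_ [[i hi <-] [hb1 hb2]]] := clc _ _ FA (nbhsx_ballx (s0, t0) _ e0).
  by exists i; split; [exact: hi | exact: hb1 | exact: mxball_coord hb2].
pose G := [set w : V | exists2 c, c \in enum C & K (w - idx R c)].
have Kcl : closed K by apply: compact_closed => //; exact: norm_hausdorff.
have Gcl : closed G by apply: closed_finU.
have claim1 : forall a, edist x' a < rho -> T a -> G (s0 *: a + t0).
  move=> a ha Ta; apply: (closed_coord Gcl) => e e0.
  have C0 : 0 <= R0 + k%:R + 1 by lra.
  have [d [d0 d1 dC _]] := @small_delta R (R0 + k%:R + 1) e C0 e0.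
  have [n2 Hn2] := ev_lt (AW R0pos).2 d0.
  have [i [hi hs ht]] := clP d d0 (n2 + n1).
  have [hj hcj] := Hsg i.
  have /andP[sj1 sjk] := sgb i.
  have aB : (T `&` ecball 0 R0) a.
    split => //; rewrite /ecball /=; have := hB a ha; lra.
  have hsi : (n2 <= sg i)%N by move: hj hi; clear; lia.
  have [pp Pp hap] := exc_lt (Hn2 (sg i) hsi) aB.
  have [q [z [Kq Zz e1]]] := blow_dec Pp.
  have zint : isint (z - vfl (sg i)) := isintB (Zi Zz) (vfl_int _).
  have e1' : z - vfl (sg i) = sc (sg i) *: pp + tt (sg i) - q.
    by rewrite e1 [q + _]addrC addrK.
  have zb : forall l, `|(z - vfl (sg i)) ord0 l| <= M%:R.
    move=> l; rewrite e1' !mxE.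
    have /andP[q0 q1] := Kcube q Kq l.
    have /andP[t1 t2] := tt_bounds (sg i) l.
    have hal := hBc a ha l.
    have hapl : `|a ord0 l - pp ord0 l| <= 1.
      by apply: le_trans (edist_coord a pp l) _; lra.
    have hpl : `|pp ord0 l| <= R0.
      have := ler_normB (a ord0 l) (a ord0 l - pp ord0 l).
      rewrite (_ : a ord0 l - (a ord0 l - pp ord0 l) = pp ord0 l); last by ring.
      lra.
    have hsp : `|sc (sg i) * pp ord0 l| <= k%:R * R0.
      rewrite normrM (ger0_norm (_ : 0 <= sc (sg i))); last lra.
      by apply: ler_pM => //; lra.
    rewrite ler_norml in hsp; rewrite ler_norml.
    have hk : k%:R * R0 <= k%:R * (R0 + 1) by rewrite ler_pM2l //; lra.
    move: hsp => /andP[hs1 hs2].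
    apply/andP; split; lra.
  have [c hc] := idx_surj zint zb.
  exists (q + idx R c).
    exists c; first by rewrite mem_enum -hcj; apply/codeP; rewrite hc subrK.
    by rewrite addrK.
  move=> l.
  have ev : q + idx R c = sc (sg i) *: pp + tt (sg i) by rewrite hc e1' addrC subrK.
  rewrite ev !mxE.
  apply: le_lt_trans dC.
  apply: est3.
  - exact: hs.
  - by apply: le_trans (hBc a ha l) _; lra.
  - by apply: le_lt_trans (edist_coord a pp l) hap.
  - by apply/andP; split => //; lra.
  - exact: ht.
have claim2 : forall a q c, edist x' a < rho -> K q -> c \in C ->
    s0 *: a + t0 = q + idx R c -> T a.
  move=> a q c ha Kq hcC e1; apply: (closed_edist Tcl) => e e0.
  pose Cst : R := N%:R * (M%:R + 1 + k%:R + 1).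
  have Cst0 : 0 <= Cst by apply: mulr_ge0 => //; lra.
  have e20 : 0 < e / 2 by lra.
  have [d [d0 d1 dC dC1]] := @small_delta R Cst (e / 2) Cst0 e20.
  have [n3 Hn3] := ev_lt (AW R0pos).1 e20.
  have [i [hi hs ht]] := clP d d0 (n3 + n1).
  have [hj hcj] := Hsg i.
  have /andP[sj1 sjk] := sgb i.
  have Zz : Z (nn (sg i)) (idx R c + vfl (sg i)) by apply/codeP; rewrite hcj.
  have Pp := blow_mk Kq Zz.
  rewrite addrK in Pp.
  set pp := (sc (sg i))^-1 *: (q + idx R c - tt (sg i)) in Pp.
  have hap : edist a pp <= d * Cst.
    have -> : d * Cst = N%:R * (d * (M%:R + 1 + k%:R + 1)) by rewrite /Cst; ring.
    apply: edist_le_unif => l.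
    have s00 : s0 != 0 by rewrite gt_eqF //; lra.
    have el : a ord0 l = ((q ord0 l + idx R c ord0 l) - t0 ord0 l) / s0.
      have := congr1 (fun w : V => w ord0 l) e1; rewrite !mxE => e'.
      rewrite -e'. field. exact: s00.
    have hpc : pp ord0 l = (q ord0 l + idx R c ord0 l - tt (sg i) ord0 l) / sc (sg i).
      by rewrite /pp !mxE mulrC.
    rewrite el hpc.
    have hw : `|q ord0 l + idx R c ord0 l| <= M%:R + 1.
      apply: le_trans (ler_normD _ _) _.
      have := idx_bound R c l; have /andP[q0 q1] := Kcube q Kq l.
      rewrite (ger0_norm q0); lra.
    exact: (est_inv s01 sj1 hs hw (t0b l) (ht l)).
  have ppB : (blowup K x (r (sg i)) `&` ecball 0 R0) pp.
    split => //; rewrite /ecball /=.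
    apply: le_trans (edist_triangle 0 a pp) _.
    have := hB a ha; lra.
  have hsi : (n3 <= sg i)%N by move: hj hi; clear; lia.
  have [b Tb hb] := exc_lt (Hn3 (sg i) hsi) ppB.
  exists b => //.
  apply: le_lt_trans (edist_triangle a pp b) _; lra.
have [dx dx0 Hdx] := cube_margin hx.
pose Lc : R := k%:R * R0 + k%:R + 1.
have Lc0 : 0 < Lc.
  have : 0 <= k%:R * R0 by apply: mulr_ge0; lra.
  rewrite /Lc; lra.
have [n4 Hn4] := ev_lt_r rcv (divr_gt0 dx0 Lc0).
have [j hj hcj] := HC (n4 + n1).
have rj1 : r j <= 1 by apply: Hn1; move: hj; clear; lia.
have /andP[sj1 sjk] := nnP rj1.
have knp := kn_gt0 j.
have kn0 : kn j != 0 by rewrite gt_eqF.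
have rjs : r j * Lc < dx.
  have := Hn4 j (ltac:(move: hj; clear; lia)); rewrite gtr0_norm //.
  by rewrite ltr_pdivlMr.
have hcoordv : forall v, edist x' v < rho -> forall l,
    `|s0 * v ord0 l + t0 ord0 l| <= k%:R * (R0 - 1) + k%:R.
  move=> v hv l; apply: le_trans (ler_normD _ _) _.
  rewrite normrM (ger0_norm (_ : 0 <= s0)); last lra.
  have /andP[t00 t0k] := t0b l; rewrite (ger0_norm t00).
  have := hBc v hv l => hv'.
  have : s0 * `|v ord0 l| <= k%:R * (R0 - 1) by apply: ler_pM => //; lra.
  lra.
have hR1 : 0 <= R0 - 1 by rewrite /R0; have := edist_ge0 0 x'; lra.
exists ((kn j)^-1 * s0), ((kn j)^-1 *: (t0 + vfl j)); split.
- by apply: mulr_gt0; [rewrite invr_gt0|lra].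
- move=> v hv Tv.
  have [c hcE hK] := claim1 v hv Tv.
  have hcC : c \in C by rewrite mem_enum in hcE.
  have Zz : Z (nn j) (idx R c + vfl j) by apply/codeP; rewrite hcj.
  have h := Zf hK Zz.
  suff -> : aff ((kn j)^-1 * s0) ((kn j)^-1 *: (t0 + vfl j)) v =
    (k%:R ^+ nn j)^-1 *: ((s0 *: v + t0 - idx R c) + (idx R c + vfl j)) by [].
  apply/rowP => l; rewrite /aff /kn !mxE; field.
  exact: kn0.
- move=> v hv hK.
  have [q [z [Kq Zz e1]]] := Zb (nn j) hK.
  have e2 : s0 *: v + t0 = q + (z - vfl j).
    apply/rowP => l; have := congr1 (fun w : V => w 0 l) e1; rewrite /aff !mxE => e'.
    have e'' : s0 * v 0 l + t0 0 l + vfl j 0 l = q 0 l + z 0 l.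
      change (k%:R ^+ nn j) with (kn j) in e'.
      rewrite -e'. field. exact: kn0.
    lra.
  have zb : forall l, `|(z - vfl j) ord0 l| <= M%:R.
    move=> l.
    have el : (z - vfl j) ord0 l = s0 * v ord0 l + t0 ord0 l - q ord0 l.
      have := congr1 (fun w : V => w ord0 l) e2; rewrite !mxE => ->; ring.
    rewrite el; apply: le_trans (ler_normB _ _) _.
    have /andP[q0 q1] := Kcube q Kq l; rewrite (ger0_norm q0).
    have := hcoordv v hv l.
    have : k%:R * (R0 - 1) <= k%:R * (R0 + 1) by rewrite ler_pM2l //; lra.
    lra.
  have [c hc] := idx_surj (isintB (Zi Zz) (vfl_int j)) zb.
  apply: (claim2 v q c hv Kq).
    by rewrite -hcj; apply/codeP; rewrite hc subrK.
  by rewrite hc.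
- move=> v hv l.
  have E : aff ((kn j)^-1 * s0) ((kn j)^-1 *: (t0 + vfl j)) v ord0 l =
     x ord0 l + (s0 * v ord0 l + t0 ord0 l - tt j ord0 l) / kn j.
    rewrite /aff ttE !mxE; field; exact: kn0.
  rewrite E.
  set D := s0 * v ord0 l + t0 ord0 l - tt j ord0 l.
  have hD : `|D| <= Lc.
    rewrite /D; apply: le_trans (ler_normB _ _) _.
    have /andP[t1 t2] := tt_bounds j l; rewrite (ger0_norm t1).
    have := hcoordv v hv l; rewrite /Lc.
    have : k%:R * (R0 - 1) <= k%:R * R0 by rewrite ler_pM2l //; lra.
    lra.
  have hD2 : `|D / kn j| < dx.
    rewrite normf_div (gtr0_norm knp) ltr_pdivrMr //.
    have h1 : Lc <= Lc * (r j * kn j) by rewrite ler_peMr //; lra.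
    have h2 : r j * Lc * kn j < dx * kn j by rewrite ltr_pM2r.
    have h3 : Lc * (r j * kn j) = r j * Lc * kn j by ring.
    lra.
  have [h1 h2] := Hdx l.
  rewrite ltr_norml in hD2; move: hD2 => /andP[h3 h4].
  apply/andP; split; lra.
Qed.


End Tangent.
Lemma pow_large (R : realType) (k : nat) (y : R) : (2 <= k)%N ->
  exists n : nat, y < (k%:R : R) ^+ n.
Proof.
move=> k2.
have [y0|y0] := lerP y 0.
  by exists 0%N; rewrite expr0; lra.
exists (Num.bound y); apply: lt_le_trans (archi_boundP (ltW y0)) _.
rewrite -natrX ler_nat; apply: ltnW; apply: ltn_expl; lia.
Qed.

Lemma decomp (R : realType) (k : nat) (r : R) : (2 <= k)%N -> 0 < r ->
  exists n : nat, r <= 1 -> 1 <= r * (k%:R : R) ^+ n <= k%:R.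
Proof.
move=> k2 r0.
have kp := kR_gt0 R k2; have k1 := kR_gt1 R k2.
have [n0 hn0] := pow_large (r^-1) k2.
have ex : exists n, (1 <= r * (k%:R : R) ^+ n).
  exists n0; rewrite -ler_pdivrMl // mulr1; exact: ltW.
case: (ex_minnP ex) => n h1 h2.
case: n h1 h2 => [|n] h1 h2.
  exists 0%N => r1; move: h1; rewrite expr0 mulr1 => h1.
  by apply/andP; split => //; lra.
exists n.+1 => _; apply/andP; split => //.
have hn : ~~ (1 <= r * (k%:R : R) ^+ n).
  by apply/negP => /h2; rewrite ltnn.
rewrite -ltNge in hn.
rewrite exprS mulrCA.
have : r * k%:R ^+ n * k%:R <= 1 * k%:R by rewrite ler_pM2r // ltW.
by rewrite mul1r mulrC.
Qed.

Theorem lemma10p3 (R : realType) (N : nat) (K : set 'rV[R]_N) :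
  self_similar_sponge K ->
  forall x : 'rV[R]_N, open_cube x -> K x ->
  forall T : set 'rV[R]_N, tangent K x T -> locally_self_similar T.
Proof.
move=> [k [m [p [k2 pinj pint [Kne Kc Keq]]]]] x hx Kx T [Tcl T0 [r [rpos rdec rcv AWc]]].
have kp := kR_gt0 R k2; have k1 := kR_gt1 R k2.
have /choice [Z HZ] := lattice k2 pint Keq.
have Zi : forall n z, Z n z -> isint z by move=> n; case: (HZ n).
have Zf : forall n q z, K q -> Z n z -> K ((k%:R ^+ n)^-1 *: (q + z))
  by move=> n; case: (HZ n).
have Zb : forall n u, K u -> exists q z, [/\ K q, Z n z & k%:R ^+ n *: u = q + z]
  by move=> n; case: (HZ n).
have /choice [nn nnP] : forall j, exists n, r j <= 1 -> 1 <= r j * k%:R ^+ n <= k%:R.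
  by move=> j; exact: decomp k2 (rpos j).
have LP := Lprime k2 pint Kc Keq hx Tcl rpos rcv AWc Zi Zf Zb nnP.
have Kcube := K_cube k2 pint Kc Keq.
move=> x1 y1 Tx1 Ty1 rho1 rho2 r1 r2.
have [l1 [b1 [l10 f1a f1b f1c]]] := LP x1 rho1 Tx1 r1.
have [l2 [b2 [l20 f2a f2b f2c]]] := LP y1 rho2 Ty1 r2.
have u0K : K (aff l2 b2 y1) by apply: f2a => //; rewrite edist_xx.
have [n hn] := pow_large (R := R) (N%:R / (l2 * rho2)) k2.
have knp : 0 < (k%:R : R) ^+ n by apply: exprn_gt0.
set kap := ((k%:R : R) ^+ n)^-1.
have kap0 : 0 < kap by rewrite invr_gt0.
have [q [z [Kq Zz ez]]] := Zb n _ u0K.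
have l2n0 : l2 != 0 by rewrite gt_eqF.
pose cc := aff kap (kap *: z).
pose f2i := aff l2^-1 (- (l2^-1 *: b2)).
have ccK : forall u, K u -> K (cc u).
  move=> u Ku; have := Zf n u z Ku Zz.
  suff -> : cc u = ((k%:R ^+ n)^-1 *: (u + z)) by [].
  by rewrite /cc /aff scalerDr.
have close : forall u, open_cube u -> edist (aff l2 b2 y1) (cc u) < l2 * rho2.
  move=> u hu.
  have e0 : aff l2 b2 y1 = kap *: (q + z).
    by rewrite -ez scalerA mulVf ?scale1r // gt_eqF.
  apply: le_lt_trans (edist_le_unif (d := kap) _) _.
    move=> i; rewrite e0 /cc /aff !mxE.
    have /andP[q0 q1] := Kcube q Kq i; have /andP[u0 u1] := hu i.
    rewrite (_ : kap * (q ord0 i + z ord0 i) - (kap * u ord0 i + kap * z ord0 i)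
               = kap * (q ord0 i - u ord0 i)); last by ring.
    rewrite normrM (gtr0_norm kap0) -[X in _ <= X]mulr1 ler_pM2l //.
    rewrite ler_norml; apply/andP; split; lra.
  rewrite /kap ltr_pdivrMr //.
  have lr : 0 < l2 * rho2 by apply: mulr_gt0.
  by move: hn; rewrite ltr_pdivrMr // mulrC.
have wB : forall u, open_cube u -> edist y1 (f2i (cc u)) < rho2.
  move=> u hu; have := close u hu.
  have e : cc u = aff l2 b2 (f2i (cc u)) by rewrite /f2i aff_inv'.
  rewrite {1}e edist_aff; last exact: ltW.
  by rewrite ltr_pM2l.
pose lam := l2^-1 * (kap * l1).
pose bet := l2^-1 *: (kap *: b1 + kap *: z) - l2^-1 *: b2.
have lam0 : 0 < lam.
  rewrite /lam. apply: mulr_gt0; first by rewrite invr_gt0.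
  exact: mulr_gt0.
have gE : forall v, aff lam bet v = f2i (cc (aff l1 b1 v)).
  move=> v; rewrite /f2i /cc !aff_comp /lam /bet.
  by apply/rowP => i; rewrite !aff_coord ?mxE; ring.
have incl : forall v, edist x1 v < rho1 -> T v ->
    edist y1 (aff lam bet v) < rho2 /\ T (aff lam bet v).
  move=> v hv Tv; rewrite gE.
  have hu := f1c v hv; have Ku := f1a v hv Tv.
  have hw := wB _ hu; split => //.
  apply: f2b => //; rewrite /f2i aff_inv' //; exact: ccK.
exists (aff lam bet); split.
- exact: similarity_aff.
- by move=> _ [v [hv Tv] <-]; exact: incl.
exists (eball (aff lam bet x1) (lam * rho1)); first exact: eball_open.
apply/seteqP; split.
  move=> _ [v [hv Tv] <-]; split; last exact: (incl v hv Tv).2.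
  by rewrite /eball /= edist_aff ?ltr_pM2l // ltW.
move=> w [hw Tw].
have lamn0 : lam != 0 by rewrite gt_eqF.
set v := aff lam^-1 (- (lam^-1 *: bet)) w.
have gv : aff lam bet v = w by rewrite /v aff_inv'.
exists v => //.
have hv : edist x1 v < rho1.
  move: hw; rewrite /eball /= -gv edist_aff ?ltr_pM2l //; exact: ltW.
split => //.
apply: f1b => //.
have hu := f1c v hv.
have hwB : edist y1 w < rho2 by rewrite -gv gE; exact: wB.
have Kf2w := f2a w hwB Tw.
have : aff l2 b2 w = cc (aff l1 b1 v) by rewrite -gv gE /f2i aff_inv'.
move=> ew; rewrite ew in Kf2w.
have [q' [z' [Kq' Zz' ez']]] := Zb n _ Kf2w.
have e3 : aff l1 b1 v + z = q' + z'.
  rewrite -ez' /cc /aff -scalerDr scalerA /kap mulfV ?scale1r //.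
  by rewrite gt_eqF.
by rewrite (int_cell_eq k2 hu (Kcube q' Kq') (Zi n z Zz) (Zi n z' Zz') e3).
Qed.
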